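(* Let $V$ be a real vector space with inner products $\langle\cdot,\cdot\rangle_1,\langle\cdot,\cdot\rangle_2$ and induced norms $\|\cdot\|_1,\|\cdot\|_2$. Suppose at least one of the following holds: (1) $\langle\cdot,\cdot\rangle_2=c\langle\cdot,\cdot\rangle_1$ for some $c>0$; (2) $\|\cdot\|_2=c\|\cdot\|_1$ for some $c>0$; (3) the two inner products give the same angle between every pair of nonzero vectors; (4) for all nonzero $x,y$, $\langle x,y\rangle_1=0\iff\langle x,y\rangle_2=0$; (5) for some $\theta_0\in(0,\pi)$, for all nonzero $x,y$ the angle between $x,y$ with respect to $\langle\cdot,\cdot\rangle_1$ is $\theta_0$ iff it is $\theta_0$ with respect to $\langle\cdot,\cdot\rangle_2$. If moreover there is a nonzero $x\in V$ with $\|x\|_1=\|x\|_2$, then $\langle\cdot,\cdot\rangle_1=\langle\cdot,\cdot\rangle_2$.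
   Context: For an inner product $\langle\cdot,\cdot\rangle$ on a real vector space with norm $\|x\|=\sqrt{\langle x,x\rangle}$, the angle between nonzero vectors $x,y$ is the unique $\theta\in[0,\pi]$ with $\cos\theta=\langle x,y\rangle/(\|x\|\|y\|)$. *)

(* Defs.v *)
From HB Require Import structures.
From mathcomp Require Import all_boot all_order all_algebra.
From mathcomp Require Import all_classical all_reals all_analysis.
Set Implicit Arguments. Unset Strict Implicit. Unset Printing Implicit Defensive.
Import Order.TTheory GRing.Theory Num.Theory.
Local Open Scope ring_scope.

Definition is_inner_product (R : realType) (V : lmodType R) (ip : V -> V -> R) : Prop :=
  [/\ (forall x y, ip x y = ip y x),
      (forall a x y z, ip (a *: x + y) z = a * ip x z + ip y z)
    & (forall x, x != 0 -> 0 < ip x x)].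

Definition ipnorm (R : realType) (V : lmodType R) (ip : V -> V -> R) (x : V) : R :=
  Num.sqrt (ip x x).

Definition ipangle (R : realType) (V : lmodType R) (ip : V -> V -> R) (x y : V) : R :=
  acos (ip x y / (ipnorm ip x * ipnorm ip y)).

(* Main.v *)
Require Import Defs.
From HB Require Import structures.
From mathcomp Require Import all_boot all_order all_algebra.
From mathcomp Require Import all_classical all_reals all_analysis.
From mathcomp Require Import ring lra.
Import Order.TTheory GRing.Theory Num.Theory.
Local Open Scope ring_scope.

Section IP.
Variables (R : realType) (V : lmodType R) (ip : V -> V -> R).
Hypothesis H : is_inner_product ip.

Lemma ipS x y : ip x y = ip y x.
Proof. by case: H. Qed.

Lemma ipL a x y z : ip (a *: x + y) z = a * ip x z + ip y z.
Proof. by case: H. Qed.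

Lemma ippos {x} : x != 0 -> 0 < ip x x.
Proof. by case: H => _ _; apply. Qed.

Lemma ipDl x y z : ip (x + y) z = ip x z + ip y z.
Proof. by rewrite -{1}[x]scale1r ipL mul1r. Qed.

Lemma ip0l z : ip 0 z = 0.
Proof.
have := ipDl 0 0 z; rewrite addr0; lra.
Qed.

Lemma ipZl a x z : ip (a *: x) z = a * ip x z.
Proof. by have := ipL a x 0 z; rewrite addr0 ip0l addr0. Qed.

Lemma ipNl x z : ip (- x) z = - ip x z.
Proof. by rewrite -scaleN1r ipZl mulN1r. Qed.

Lemma ipBl x y z : ip (x - y) z = ip x z - ip y z.
Proof. by rewrite ipDl ipNl. Qed.

Lemma ipDr x y z : ip z (x + y) = ip z x + ip z y.
Proof. by rewrite ipS ipDl !(ipS z). Qed.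
Lemma ipZr a x z : ip z (a *: x) = a * ip z x.
Proof. by rewrite ipS ipZl (ipS z). Qed.
Lemma ipNr x z : ip z (- x) = - ip z x.
Proof. by rewrite ipS ipNl (ipS z). Qed.
Lemma ipBr x y z : ip z (x - y) = ip z x - ip z y.
Proof. by rewrite ipDr ipNr. Qed.
Lemma ip0r z : ip z 0 = 0.
Proof. by rewrite ipS ip0l. Qed.

Lemma ip_ge0 x : 0 <= ip x x.
Proof. by have [->|/ippos/ltW//] := eqVneq x 0; rewrite ip0l. Qed.

Lemma ip_eq0 x : ip x x = 0 -> x = 0.
Proof. by have [//|/ippos] := eqVneq x 0; rewrite lt0r => /andP[/eqP]. Qed.

Lemma ipCS x y : ip x y ^+ 2 <= ip x x * ip y y.
Proof.
have [->|x0] := eqVneq x 0; first by rewrite !ip0l expr2 mul0r mul0r.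
have a0 := ippos x0.
set t := - ip x y / ip x x.
have h := ip_ge0 (t *: x + y).
rewrite ipDl !ipDr !ipZl !ipZr (ipS y x) in h.
have e : ip x x * (t * (t * ip x x) + t * ip x y + (t * ip x y + ip y y))
   = ip x x * ip y y - ip x y ^+ 2.
  rewrite /t; field; by rewrite gt_eqF.
rewrite -subr_ge0 -e; exact: mulr_ge0 (ltW a0) h.
Qed.

Lemma ip_range x y : x != 0 -> y != 0 ->
  -1 <= ip x y / (ipnorm ip x * ipnorm ip y) <= 1.
Proof.
move=> x0 y0.
have p : 0 < ipnorm ip x * ipnorm ip y.
  by rewrite mulr_gt0 // /ipnorm sqrtr_gt0 ippos.
rewrite -ler_norml.
rewrite normrM normfV (ger0_norm (ltW p)) ler_pdivrMr // mul1r /ipnorm -sqrtrM ?ip_ge0 //.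
rewrite -sqrtr_sqr; rewrite ler_sqrt ?mulr_ge0 ?ip_ge0 //.
exact: ipCS.
Qed.

Lemma ip_angle x y th : x != 0 -> y != 0 -> ipangle ip x y = th ->
  ip x y = cos th * (ipnorm ip x * ipnorm ip y).
Proof.
move=> x0 y0 <-; rewrite /ipangle acosK; last by rewrite in_itv /= ip_range.
rewrite mulrVK // unitfE mulf_neq0 // /ipnorm sqrtr_eq0 -ltNge ippos //.
Qed.

End IP.
Arguments ipS {R V ip}.
Arguments ipL {R V ip}.
Arguments ippos {R V ip} H {x}.
Arguments ipDl {R V ip}.
Arguments ip0l {R V ip}.
Arguments ipZl {R V ip}.
Arguments ipNl {R V ip}.
Arguments ipBl {R V ip}.
Arguments ipDr {R V ip}.
Arguments ipZr {R V ip}.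
Arguments ipNr {R V ip}.
Arguments ipBr {R V ip}.
Arguments ip0r {R V ip}.
Arguments ip_ge0 {R V ip}.
Arguments ip_eq0 {R V ip}.
Arguments ipCS {R V ip}.
Arguments ip_range {R V ip}.
Arguments ip_angle {R V ip}.

Lemma sqrt_scale (R : realType) (a b : R) : 0 < a -> 0 < b ->
  exists t, 0 < t /\ t * (t * b) = a.
Proof.
move=> a0 b0; exists (Num.sqrt (a / b)); split.
  by rewrite sqrtr_gt0 divr_gt0.
by rewrite mulrA -expr2 sqr_sqrtr ?divfK ?gt_eqF // ltW // divr_gt0.
Qed.

Arguments sqrt_scale {R a b}.
Section Main.
Variables (R : realType) (V : lmodType R) (ip1 ip2 : V -> V -> R).
Hypotheses (H1 : is_inner_product ip1) (H2 : is_inner_product ip2).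

Definition PropP := forall x y : V, x != 0 -> y != 0 ->
  ip1 x x = ip1 y y -> ip2 x x = ip2 y y.
Definition PropO := forall u v : V, u != 0 -> v != 0 ->
  ip1 u v = 0 -> ip2 u v = 0.
Definition PropO' := forall u v : V, u != 0 -> v != 0 ->
  ip1 u v = 0 -> ip1 u u = ip1 v v -> ip2 u v = 0.

Lemma from_P : PropP -> (exists x : V, x != 0 /\ ipnorm ip1 x = ipnorm ip2 x) ->
  forall x y, ip1 x y = ip2 x y.
Proof.
move=> P [x0 [x00 en]].
have e0 : ip1 x0 x0 = ip2 x0 x0.
  by rewrite -(sqr_sqrtr (ip_ge0 H1 x0)) -(sqr_sqrtr (ip_ge0 H2 x0)) -/(ipnorm _ _) en.
have Q : forall y, ip1 y y = ip2 y y.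
  move=> y; have [->|y0] := eqVneq y 0; first by rewrite (ip0l H1) (ip0l H2).
  have [t [t0 et]] := sqrt_scale (ippos H1 x00) (ippos H1 y0).
  have ty0 : t *: y != 0 by rewrite scaler_eq0 negb_or gt_eqF.
  have := P _ _ x00 ty0; rewrite (ipZl H1) (ipZr H1) et (ipZl H2) (ipZr H2).
  move=> /(_ erefl); rewrite -e0 -et => /(mulfI (lt0r_neq0 t0)) /(mulfI (lt0r_neq0 t0)).
  by [].
move=> x y.
have k : forall ip, is_inner_product ip ->
   ip (x + y) (x + y) = ip x x + 2 * ip x y + ip y y.
  move=> ip H; rewrite (ipDl H) !(ipDr H) (ipS H y x); ring.
have := k _ H1; have := k _ H2; rewrite -!Q; lra.
Qed.

Lemma P_from_O : PropO -> PropP.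
Proof.
move=> O x y x0 y0 e.
have [exy|nxy] := eqVneq (x + y) 0.
  have -> : y = - x by rewrite -(addKr x y) exy addr0.
  by rewrite (ipNl H2) (ipNr H2) opprK.
have [exy'|nxy'] := eqVneq (x - y) 0.
  by move/eqP: exy'; rewrite subr_eq0 => /eqP ->.
have := O _ _ nxy nxy'.
rewrite (ipDl H1) !(ipBr H1) (ipDl H2) !(ipBr H2) (ipS H1 y x) (ipS H2 y x) e.
have h0 : ip1 y y - ip1 x y + (ip1 x y - ip1 y y) = 0 by ring.
move/(_ h0); lra.
Qed.

Lemma O_from_O' : PropO' -> PropO.
Proof.
move=> O u v u0 v0 e.
have [t [t0 et]] := sqrt_scale (ippos H1 u0) (ippos H1 v0).
have tv0 : t *: v != 0 by rewrite scaler_eq0 negb_or lt0r_neq0.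
have := O _ _ u0 tv0; rewrite !(ipZr H1) (ipZl H1) e mulr0 et (ipZr H2).
move=> /(_ erefl erefl) /eqP; rewrite mulf_eq0 (negbTE (lt0r_neq0 t0)) /=.
by move/eqP.
Qed.

Lemma O_halfpi : (forall u v, u != 0 -> v != 0 ->
   ipangle ip1 u v = pi / 2 -> ipangle ip2 u v = pi / 2) -> PropO.
Proof.
move=> S u v u0 v0 e.
have : ipangle ip1 u v = pi / 2 by rewrite /ipangle e mul0r acos0.
move/(S _ _ u0 v0)/(ip_angle H2 _ _ _ u0 v0); rewrite cos_pihalf mul0r.
by [].
Qed.

Lemma O'_theta th : 0 < th < pi -> cos th != 0 ->
  (forall u v, u != 0 -> v != 0 ->
   ipangle ip1 u v = th -> ipangle ip2 u v = th) -> PropO'.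
Proof.
move=> /andP[th0 thpi] c0 S u v u0 v0 e1 en.
set al := cos th. set be := sin th.
have ab : al ^+ 2 + be ^+ 2 = 1 by apply: cos2Dsin2.
have b0 : 0 < be by apply: sin_gt0_pi; rewrite th0 thpi.
have n0 := ippos H1 u0.
set a := ip2 u u. set b := ip2 u v. set d := ip2 v v.
have a0 : 0 < a := ippos H2 u0.
have claim : forall g, g ^+ 2 = be ^+ 2 ->
   (al * a + g * b) ^+ 2 = al ^+ 2 * (a * (al ^+ 2 * a + 2 * al * g * b + g ^+ 2 * d)).
  move=> g eg.
  set w := al *: u + g *: v.
  have e1w : ip1 u w = al * ip1 u u by rewrite (ipDr H1) !(ipZr H1) e1 mulr0 addr0.
  have eww : ip1 w w = ip1 u u.
    rewrite /w (ipDl H1) !(ipDr H1) !(ipZl H1) !(ipZr H1) (ipS H1 v u) e1 -en.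
    rewrite !mulr0 addr0 add0r mulrA -expr2 mulrA -expr2 eg -mulrDl ab mul1r //.
  have w0 : w != 0.
    by apply/eqP => w0; move: eww; rewrite w0 (ip0l H1) => h; move: n0; rewrite -h ltxx.
  have ang : ipangle ip1 u w = th.
    rewrite /ipangle e1w /ipnorm eww -expr2 sqr_sqrtr ?ltW // mulfK ?lt0r_neq0 //.
    by rewrite cosK // in_itv /= !ltW.
  have := ip_angle H2 _ _ _ u0 w0 (S _ _ u0 w0 ang) => h.
  have : ip2 u w ^+ 2 = al ^+ 2 * (a * ip2 w w).
    rewrite h /ipnorm exprMn exprMn !sqr_sqrtr ?(ip_ge0 H2) //.
  have -> : ip2 u w = al * a + g * b by rewrite (ipDr H2) !(ipZr H2).
  have -> : ip2 w w = al ^+ 2 * a + 2 * al * g * b + g ^+ 2 * d.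
    rewrite /w (ipDl H2) !(ipDr H2) !(ipZl H2) !(ipZr H2) (ipS H2 v u) -/a -/b -/d.
    ring.
  by [].
have E1 := claim be erefl.
have E2 := claim (- be) (sqrrN _).
have E : 4 * al * be * a * b * (1 - al ^+ 2) = 0.
  have -> : 4 * al * be * a * b * (1 - al ^+ 2) =
     ((al * a + be * b) ^+ 2 - al ^+ 2 * (a * (al ^+ 2 * a + 2 * al * be * b + be ^+ 2 * d)))
   - ((al * a + - be * b) ^+ 2 - al ^+ 2 * (a * (al ^+ 2 * a + 2 * al * - be * b + (- be) ^+ 2 * d))).
    ring.
  by rewrite E1 E2 !subrr.
have h1 : 1 - al ^+ 2 = be ^+ 2 by rewrite -ab; ring.
move: E; rewrite h1 => E.
have k : 4 * al * be * a * be ^+ 2 != 0.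
  have f : (4:R) != 0 by apply/eqP; lra.
  by rewrite !mulf_neq0 // ?expf_neq0 ?(lt0r_neq0 b0) ?(lt0r_neq0 a0).
apply: (mulfI k); rewrite mulr0 -E; ring.
Qed.

End Main.
Arguments from_P {R V ip1 ip2}.
Arguments P_from_O {R V ip1 ip2}.
Arguments O_from_O' {R V ip1 ip2}.
Arguments O_halfpi {R V ip1 ip2}.
Arguments O'_theta {R V ip1 ip2}.

Theorem mainTheorem7 (R : realType) (V : lmodType R) (ip1 ip2 : V -> V -> R) :
  is_inner_product ip1 -> is_inner_product ip2 ->
  (   (exists c : R, 0 < c /\ forall x y, ip2 x y = c * ip1 x y)
   \/ (exists c : R, 0 < c /\ forall x, ipnorm ip2 x = c * ipnorm ip1 x)
   \/ (forall x y, x != 0 -> y != 0 -> ipangle ip1 x y = ipangle ip2 x y)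
   \/ (forall x y, x != 0 -> y != 0 -> (ip1 x y = 0 <-> ip2 x y = 0))
   \/ (exists theta0 : R, 0 < theta0 < pi /\
         forall x y, x != 0 -> y != 0 ->
           (ipangle ip1 x y = theta0 <-> ipangle ip2 x y = theta0))) ->
  (exists x : V, x != 0 /\ ipnorm ip1 x = ipnorm ip2 x) ->
  forall x y, ip1 x y = ip2 x y.
Proof.
move=> H1 H2 hyp ex.
apply: (from_P H1 H2 _ ex).
case: hyp => [[c [c0 e]]|[[c [c0 e]]|[hA|[hO|[th [thr hS]]]]]].
- by move=> u w _ _ h; rewrite !e h.
- have q z : ip2 z z = c ^+ 2 * ip1 z z.
    have := e z; rewrite /ipnorm => ez.
    by rewrite -(sqr_sqrtr (ip_ge0 H2 z)) ez exprMn sqr_sqrtr // (ip_ge0 H1).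
  by move=> u w _ _ h; rewrite !q h.
- apply: (P_from_O H1 H2); apply: (O_halfpi H2) => u v u0 v0.
  by rewrite hA.
- apply: (P_from_O H1 H2) => u v u0 v0; exact: (hO _ _ u0 v0).1.
- have [c0|c0] := eqVneq (cos th) 0.
    have thi : th \in `[0, pi] by case/andP: thr => a b; rewrite in_itv /= !ltW.
    have eth : th = pi / 2 by rewrite -(cosK thi) c0 acos0.
    apply: (P_from_O H1 H2); apply: (O_halfpi H2) => u v u0 v0.
    by rewrite -eth; exact: (hS _ _ u0 v0).1.
  apply: (P_from_O H1 H2); apply: (O_from_O' H1 H2).
  apply: (O'_theta H1 H2 _ thr c0) => u v u0 v0; exact: (hS _ _ u0 v0).1.
Qed.
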